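(* Fix $i\in\{1,\dots,k\}$ and $\hat a\in[2^n]$. Let $\mathcal{M}(\hat a)=\{m\in\mathcal{M}^{\text{good}}:a_i(m)=\hat a\}$, and suppose $|\{b_i(m):m\in\mathcal{M}(\hat a)\}|=L$. Then there exist $(L-1)\,|\mathcal{M}(\hat a)|$ distinct elements of $\mathcal{B}^{\text{err}}$, each of which the decoder of terminal $t$ maps to some message in $\mathcal{M}(\hat a)$.
   Context: Setting. $\mathcal{N}$ is a directed network containing nodes $s_1,\dots,s_k,t_1,\dots,t_k$. The network $\mathcal{G}$ is obtained from $\mathcal{N}$ by adding new nodes $s,t,A_1,\dots,A_k,B_1,\dots,B_k$ and, for each $i$, the unit-capacity edges $a_i=(s,A_i)$, two parallel edges $x_i,y_i$ from $A_i$ to $B_i$, $z_i=(A_i,s_i)$, $z'_i=(t_i,B_i)$, and $b_i=(B_i,t)$; the incoming edges of $t$ are exactly $b_1,\dots,b_k$. Admissible error patterns $\boldsymbol r=(r_e)$ are those in which at most one edge $e$ has $r_e\neq0$, with $e\notin\{a_1,\dots,a_k,b_1,\dots,b_k\}$. The output of an edge is its input XOR $r_e$. Let $\mathcal{C}$ be a length-$n$ network code on $\mathcal{G}$. The source $s$ has message $m\in[2^{kn}]$, where $[N]=\{1,\dots,N\}$. An edge $e=(u,v)$ of capacity $c_e$ carries a value in $[2^{nc_e}]$ computed from the signals on the incoming edges of $u$ (and from $m$ if $u=s$). The terminal $t$ has a decoder mapping each tuple in $[2^n]^k$ received on $(b_1,\dots,b_k)$ to a message. For an edge $e$, $e(m,\boldsymbol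 r)$ is the signal received on $e$ under message $m$ and error pattern $\boldsymbol r$, and $e(m)=e(m,\boldsymbol 0)$. Write $\boldsymbol b(m)=(b_1(m),\dots,b_k(m))$. Let $\mathcal{M}^{\text{good}}$ be the set of messages $m$ such that $t$ decodes to $m$ under every admissible error pattern when $m$ is sent. Let $\mathcal{B}^{\text{good}}=\{\boldsymbol b(m):m\in\mathcal{M}^{\text{good}}\}$ and $\mathcal{B}^{\text{err}}=[2^n]^k\setminus\mathcal{B}^{\text{good}}$. *)

(* Defs.v *)
From mathcomp Require Import all_boot.
Set Implicit Arguments. Unset Strict Implicit. Unset Printing Implicit Defensive.

(* Elements of [2^w] are represented as w-bit vectors; XOR is bitwise. *)
Definition bits (w : nat) := {ffun 'I_w -> bool}.
Definition bxor (w : nat) (u v : bits w) : bits w := [ffun j => u j (+) v j].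
Definition bzero (w : nat) : bits w := [ffun => false].

(* The network G obtained from N by adding s, t, A_i, B_i and the gadget edges
   a_i = (s,A_i), x_i,y_i : A_i -> B_i, z_i = (A_i,s_i), z'_i = (t_i,B_i),
   b_i = (B_i,t).  The nodes of N are exactly the nodes that are not new,
   and the edges of N are exactly the edges that are not gadget edges. *)
Record gadget_net (k : nat) : Type := GadgetNet {
  V : finType;
  E : finType;
  tl : E -> V;
  hd : E -> V;
  cap : E -> nat;
  src : V;
  snk : V;
  nA : 'I_k -> V;
  nB : 'I_k -> V;
  ns : 'I_k -> V;
  nt : 'I_k -> V;
  ea : 'I_k -> E;
  ex : 'I_k -> E;
  ey : 'I_k -> E;
  ez : 'I_k -> E;
  ez' : 'I_k -> E;
  eb : 'I_k -> E
}.

Arguments V {k} _.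
Arguments E {k} _.
Arguments tl {k} _.
Arguments hd {k} _.
Arguments cap {k} _.
Arguments src {k} _.
Arguments snk {k} _.
Arguments nA {k} _.
Arguments nB {k} _.
Arguments ns {k} _.
Arguments nt {k} _.
Arguments ea {k} _.
Arguments ex {k} _.
Arguments ey {k} _.
Arguments ez {k} _.
Arguments ez' {k} _.
Arguments eb {k} _.

Section GadgetDefs.
Variables (k : nat) (G : gadget_net k).

Definition gedge (j : 'I_6) (i : 'I_k) : E G :=
  nth (ea G i) [:: ea G i; ex G i; ey G i; ez G i; ez' G i; eb G i] j.

Definition new_node (v : V G) : bool :=
  [|| v == src G, v == snk G | [exists i, (v == nA G i) || (v == nB G i)]].

Definition gadget_edge (e : E G) : bool := [exists j, exists i, e == gedge j i].

Definition garc : rel (V G) :=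
  fun u v => [exists e, (tl G e == u) && (hd G e == v)].

Definition acyclic : Prop := forall u v, garc u v -> ~~ connect garc v u.

Definition gadget_ok : Prop :=
  (forall i, tl G (ea G i) = src G /\ hd G (ea G i) = nA G i /\
             tl G (ex G i) = nA G i /\ hd G (ex G i) = nB G i /\
             tl G (ey G i) = nA G i /\ hd G (ey G i) = nB G i /\
             tl G (ez G i) = nA G i /\ hd G (ez G i) = ns G i /\
             tl G (ez' G i) = nt G i /\ hd G (ez' G i) = nB G i /\
             tl G (eb G i) = nB G i /\ hd G (eb G i) = snk G) /\
  (forall j i, cap G (gedge j i) = 1) /\
  (forall j1 i1 j2 i2, gedge j1 i1 = gedge j2 i2 -> j1 = j2 /\ i1 = i2) /\
  (src G <> snk G /\ injective (nA G) /\ injective (nB G) /\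
   (forall i, nA G i <> src G /\ nA G i <> snk G /\
              nB G i <> src G /\ nB G i <> snk G) /\
   (forall i j, nA G i <> nB G j)) /\
  (forall i, ~~ new_node (ns G i) /\ ~~ new_node (nt G i)) /\
  (forall e, ~~ gadget_edge e -> ~~ new_node (tl G e) /\ ~~ new_node (hd G e)).

Definition into_t_ok : Prop :=
  forall e, hd G e = snk G <-> exists i, e = eb G i.

End GadgetDefs.

Section CodeDefs.
Variables (k : nat) (G : gadget_net k) (n : nat).

Definition msg := 'I_(2 ^ (k * n)).
Definition sigs := {dffun forall e : E G, bits (n * cap G e)}.
Definition recv := {dffun forall j : 'I_k, bits (n * cap G (eb G j))}.

Record net_code : Type := NetCode {
  enc : forall e : E G, sigs -> msg -> bits (n * cap G e);
  dec : recv -> msg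
}.


Definition code_local (C : net_code) : Prop :=
  forall e (sg1 sg2 : sigs) (m1 m2 : msg),
    (forall e', hd G e' = tl G e -> sg1 e' = sg2 e') ->
    (tl G e = src G -> m1 = m2) ->
    enc C e sg1 m1 = enc C e sg2 m2.

(* sg is the signal assignment e |-> e(m, r): output = input XOR r_e *)
Definition consistent (C : net_code) (m : msg) (r sg : sigs) : Prop :=
  forall e, sg e = bxor (enc C e sg m) (r e).

Definition zero_err : sigs := [ffun e => bzero (n * cap G e)].

Definition admissible (r : sigs) : bool :=
  [exists e0, [forall i, (e0 != ea G i) && (e0 != eb G i)] &&
              [forall e, (e != e0) ==> (r e == bzero (n * cap G e))]].

Definition recv_of (sg : sigs) : recv := [ffun j => sg (eb G j)].

Section Sem.
Variables (C : net_code) (sigf : msg -> sigs -> sigs).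

Definition Mgood : {set msg} :=
  [set m | [forall r, admissible r ==> (dec C (recv_of (sigf m r)) == m)]].

Definition Bgood : {set recv} := [set recv_of (sigf m zero_err) | m in Mgood].
Definition Berr : {set recv} := ~: Bgood.

Definition Mhat (i : 'I_k) (ahat : bits (n * cap G (ea G i))) : {set msg} :=
  [set m in Mgood | sigf m zero_err (ea G i) == ahat].
End Sem.
End CodeDefs.

(* Main.v *)
Require Import Defs.
From mathcomp Require Import all_boot.
From mathcomp Require Import zify.
Set Implicit Arguments. Unset Strict Implicit. Unset Printing Implicit Defensive.

Section Aux.
Variables (k n : nat) (G : gadget_net k) (C : net_code G n)
  (sigf : msg k n -> sigs G n -> sigs G n).
Hypothesis Hac : acyclic G.
Hypothesis Hloc : code_local C.
Hypothesis Hcons : forall m r, consistent C m r (sigf m r).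

Definition rank (v : V G) := #|[set u | connect (@garc _ G) u v]|.

Lemma rank_lt u v : @garc _ G u v -> rank u < rank v.
Proof.
move=> huv; apply: proper_card; apply/properP; split.
- apply/subsetP => w; rewrite !inE => hw; exact: connect_trans hw (connect1 huv).
- exists v; first by rewrite inE connect0.
  by rewrite inE; apply: Hac.
Qed.

Lemma unaffected (m : msg k n) (r : sigs G n) (e0 : E G) : (forall e, e != e0 -> r e = bzero (n * cap G e)) ->
  forall e, e != e0 -> ~~ connect (@garc _ G) (hd G e0) (tl G e) ->
  sigf m r e = sigf m (zero_err G n) e.
Proof.
move=> hr e.
have [N] := ubnP (rank (tl G e)). elim: N e => // N IH e hN he he0c.
rewrite (Hcons m r e) (Hcons m (zero_err G n) e) hr // /zero_err ffunE.
congr bxor. apply: Hloc => // e' he'.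
have harc : @garc _ G (tl G e') (tl G e).
  by apply/existsP; exists e'; rewrite eqxx he' eqxx.
apply: IH.
- have := rank_lt harc; lia.
- apply/eqP => ee; subst e0.
  by rewrite he' connect0 in he0c.
- apply: contra he0c => hc; exact: connect_trans hc (connect1 harc).
Qed.
End Aux.

Theorem lemma4 (k n : nat) (G : gadget_net k) (C : net_code G n)
    (sigf : msg k n -> sigs G n -> sigs G n) :
  gadget_ok G -> into_t_ok G -> acyclic G -> code_local C ->
  (forall m r, consistent C m r (sigf m r)) ->
  forall (i : 'I_k) (ahat : bits (n * cap G (ea G i))) (L : nat),
    #|[set sigf m (zero_err G n) (eb G i) | m in Mhat C sigf ahat]| = L ->
    exists S : {set recv G n},
      [/\ #|S| = ((L - 1) * #|Mhat C sigf ahat|)%N,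
          S \subset Berr C sigf &
          forall y, y \in S -> dec C y \in Mhat C sigf ahat].
Proof.
case=> Hend [_ [Hdist [[Hst [HnA [HnB [Hnew Hab]]]] [Hnsnt Hng]]]] _ Hac Hloc Hcons i ahat L HL.
have newA j : new_node (nA G j).
  by apply/orP; right; apply/orP; right; apply/existsP; exists j; rewrite eqxx.
have newB j : new_node (nB G j).
  by apply/orP; right; apply/orP; right; apply/existsP; exists j; rewrite eqxx orbT.
have hdA e j : hd G e = nA G j -> e = ea G j.
  move=> he; case: (boolP (gadget_edge e)) => [|hg]; last first.
    by have [_] := Hng e hg; rewrite he newA.
  move/existsP=> [jj /existsP [i' /eqP ee]]; subst e.
  have [h1 [h2 [h3 [h4 [h5 [h6 [h7 [h8 [h9 [h10 [h11 h12]]]]]]]]]]] := Hend i'.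
  case: jj he => [[|[|[|[|[|[|jj]]]]]] hj] //= he; rewrite /gedge /= in he *.
  - by rewrite (HnA _ _ (etrans (esym h2) he)).
  - by case: (Hab j i'); rewrite -he; exact: h4.
  - by case: (Hab j i'); rewrite -he; exact: h6.
  - by have [/negP[]] := Hnsnt i'; rewrite -h8 he newA.
  - by case: (Hab j i'); rewrite -he; exact: h10.
  - by have [_ [/(_ (esym (etrans (esym h12) he)))]] := Hnew j.
have hdB e : hd G e = nB G i -> [\/ e = ex G i, e = ey G i | e = ez' G i].
  move=> he; case: (boolP (gadget_edge e)) => [|hg]; last first.
    by have [_] := Hng e hg; rewrite he newB.
  move/existsP=> [jj /existsP [i' /eqP ee]]; subst e.
  have [h1 [h2 [h3 [h4 [h5 [h6 [h7 [h8 [h9 [h10 [h11 h12]]]]]]]]]]] := Hend i'.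
  case: jj he => [[|[|[|[|[|[|jj]]]]]] hj] //= he; rewrite /gedge /= in he *.
  - by case: (Hab i' i); rewrite -he; exact: (esym h2).
  - by rewrite (HnB _ _ (etrans (esym h4) he)); apply: Or31.
  - by rewrite (HnB _ _ (etrans (esym h6) he)); apply: Or32.
  - by have [/negP[]] := Hnsnt i'; rewrite -h8 he newB.
  - by rewrite (HnB _ _ (etrans (esym h10) he)); apply: Or33.
  - by have [_ [_ [_ /(_ (esym (etrans (esym h12) he)))]]] := Hnew i.

have [h1 [h2 [h3 [h4 [h5 [h6 [h7 [h8 [h9 [h10 [h11 h12]]]]]]]]]]] := Hend i.
have dist a b c d (hab : (a < 6)%N) (hcd : (c < 6)%N) :
   a != c -> gedge G (Ordinal hab) b != gedge G (Ordinal hcd) d.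
  move=> ne; apply/eqP => h; have [ac _] := Hdist _ _ _ _ h.
  by move: ac => /(congr1 val) /= ac; rewrite ac eqxx in ne.
set z0 := zero_err G n.
set M := Mhat C sigf ahat.
have inM m : m \in M -> m \in Mgood C sigf /\ sigf m z0 (ea G i) = ahat.
  by rewrite inE => /andP[? /eqP].
have tlA e m m' : tl G e = nA G i -> m \in M -> m' \in M -> sigf m z0 e = sigf m' z0 e.
  move=> he hm hm'; rewrite (Hcons m z0 e) (Hcons m' z0 e); congr bxor.
  apply: (Hloc) => [e' he'|]; last by rewrite he => hh; case: (Hnew i) => /(_ hh).
  have -> := hdA e' i (etrans he' he).
  by rewrite (inM _ hm).2 (inM _ hm').2.
pose r (m m' : msg k n) : sigs G n := [ffun e => if e == ez' G i then
    bxor (sigf m z0 e) (sigf m' z0 e) else bzero (n * cap G e)].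
have rz m m' e : e != ez' G i -> r m m' e = bzero (n * cap G e).
  by move=> h; rewrite /r ffunE (negbTE h).
have adm_r m m' : admissible (r m m').
  apply/existsP; exists (ez' G i); apply/andP; split.
    apply/forallP => j; apply/andP; split.
      exact: (dist 4 i 0 j isT isT).
    exact: (dist 4 i 5 j isT isT).
  apply/forallP => e; apply/implyP => h; by rewrite rz.
have adm0 : admissible z0.
  apply/existsP; exists (ez' G i); apply/andP; split.
    apply/forallP => j; apply/andP; split.
      exact: (dist 4 i 0 j isT isT).
    exact: (dist 4 i 5 j isT isT).
  by apply/forallP => e; apply/implyP => h; rewrite /z0 /zero_err ffunE.
have arc e : @garc _ G (tl G e) (hd G e).
  by apply/existsP; exists e; rewrite !eqxx.
have key m m' : m \in M -> m' \in M -> sigf m (r m m') (eb G i) = sigf m' z0 (eb G i).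
  move=> hm hm'.
  have un := unaffected Hac Hloc Hcons m (rz m m').
  rewrite (Hcons m _ (eb G i)) (Hcons m' z0 (eb G i)) rz; last exact: (dist 5 i 4 i isT isT).
  congr bxor; last by rewrite /z0 /zero_err ffunE.
  apply: (Hloc) => [e' he'|]; last by rewrite h11 => hh; case: (Hnew i) => _ [_ [/(_ hh)]].
  have hB := hdB e' (etrans he' h11).
  have hxy e : tl G e = nA G i -> hd G e = nB G i -> e != ez' G i ->
      sigf m (r m m') e = sigf m' z0 e.
    move=> ht hh hne; rewrite un //; last first.
      by rewrite h10 ht; apply: (Hac); rewrite -ht -hh.
    exact: tlA.
  case: hB => ->.
  - by apply: hxy; [exact: h3|exact: h4|exact: (dist 1 i 4 i isT isT)].
  - by apply: hxy; [exact: h5|exact: h6|exact: (dist 2 i 4 i isT isT)].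
  rewrite (Hcons m _ (ez' G i)).
  have -> : enc C (ez' G i) (sigf m (r m m')) m = enc C (ez' G i) (sigf m z0) m.
    apply: (Hloc) => // e'' he''; apply: un.
      apply/eqP => ee; subst e''.
      have [_ /negP []] := Hnsnt i; rewrite -h9 -he'' h10; exact: newB.
    apply/negP => hc.
    have : connect (@garc _ G) (nB G i) (nt G i).
      rewrite h10 in hc; apply: connect_trans hc _; apply: connect1; rewrite -h9 -he''; exact: arc.
    apply/negP; apply: (Hac); rewrite -h9 -h10; exact: arc.
  rewrite /r ffunE eqxx (Hcons m z0 (ez' G i)).
  by apply/ffunP => j; rewrite /z0 /zero_err !ffunE addbF addbA addbb.

set bi := fun m => sigf m z0 (eb G i).
set Bs := [set bi m | m in M].
have decgood m rr : m \in Mgood C sigf -> admissible rr -> dec C (recv_of (sigf m rr)) = m.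
  move=> hg ha; move: hg; rewrite inE => /forallP /(_ rr) /implyP /(_ ha).
  by move/eqP.
have decg m rr : m \in M -> admissible rr -> dec C (recv_of (sigf m rr)) = m.
  move=> /inM [hg _] ha; move: hg; rewrite inE => /forallP /(_ rr) /implyP /(_ ha).
  by move/eqP.
pose pk (m : msg k n) (b : bits (n * cap G (eb G i))) :=
  odflt m [pick m' in M | bi m' == b].
pose P := [set p : msg k n * bits (n * cap G (eb G i)) |
            (p.1 \in M) && (p.2 \in Bs :\ bi p.1)].
have pkP p : p \in P -> pk p.1 p.2 \in M /\ bi (pk p.1 p.2) = p.2.
  rewrite inE => /andP [_]; rewrite in_setD1 => /andP [_ /imsetP [m'' hm'' e'']].
  rewrite /pk; case: pickP => [m' /andP [hm' /eqP] //|h].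
  by move: (h m''); rewrite hm'' e'' eqxx.
pose Y (p : msg k n * bits (n * cap G (eb G i))) :=
  recv_of (sigf p.1 (r p.1 (pk p.1 p.2))).
have YP p : p \in P -> dec C (Y p) = p.1 /\ Y p i = p.2.
  move=> hp; have := hp; rewrite inE => /andP [h1p _].
  have [hk hb] := pkP p hp.
  split; first exact: decg.
  by rewrite /Y /recv_of ffunE key.
exists (Y @: P); split.
- rewrite card_in_imset; last first.
    move=> [p1 p2] [q1 q2] hp hq ey.
    have [/= dp yp] := YP _ hp; have [/= dq yq] := YP _ hq.
    have e1 : p1 = q1 by rewrite -dp -dq ey.
    have e2 : p2 = q2 by rewrite -yp -yq ey.
    by rewrite e1 e2.
  transitivity (\sum_(m in M) \sum_(b in Bs :\ bi m) 1).
    rewrite pair_big_dep /= -sum1_card; apply: eq_bigl => p; by rewrite inE.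
  rewrite (eq_bigr (fun _ => L - 1)); first by rewrite sum_nat_const mulnC.
  move=> m hm; rewrite sum1_card.
  move: (cardsD1 (bi m) Bs); rewrite imset_f // HL; lia.
- apply/subsetP => y /imsetP [p hp ->]; rewrite inE.
  apply/negP => /imsetP [m'' hm'' hy].
  have [dp yp] := YP p hp.
  have e := decgood m'' z0 hm'' adm0; rewrite -hy dp in e.
  move: hp; rewrite inE in_setD1 => /andP [_ /andP [/eqP hne _]]; apply: hne.
  by rewrite -yp hy /recv_of ffunE -e.
- move=> y /imsetP [p hp ->]; have [dp _] := YP p hp; rewrite dp.
  by move: hp; rewrite inE => /andP [].
Qed.
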